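(* Consider the parallel multiple access channel power allocation game with $K$ users and $A$ nodes, as described in the context, with random channel gains. If $p\in\Delta$ is a Nash equilibrium, then almost surely $p$ lies in the relative interior of a face of the polytope $\Delta$ of dimension at most $A-1$.
   Context: Setting: users $\mathcal{K}=\{1,\dots,K\}$, nodes $\mathcal{A}=\{1,\dots,A\}$. User $k$ has maximum power $P_k>0$ and strategy set $\Delta_k=\{p_k\in\mathbb{R}^{\mathcal{A}}: p_{k\alpha}\ge 0,\ \sum_\alpha p_{k\alpha}=P_k\}$ (a scaled simplex); $\Delta=\prod_k\Delta_k\subset\mathbb{R}^{KA}$. Payoffs: $u_k(p)=\sum_{\alpha} b_\alpha\log\bigl(1+\frac{g_{k\alpha}p_{k\alpha}}{\sigma_\alpha^2+\sum_{\ell\neq k}g_{\ell\alpha}p_{\ell\alpha}}\bigr)$ with constants $b_\alpha>0$, $\sigma_\alpha^2>0$ and random channel gains $g_{k\alpha}>0$ drawn from a continuous (nonatomic) probability distribution on the positive reals; ''almost surely'' refers to their law. $q\in\Delta$ is a Nash equilibrium if $u_k(q)\ge u_k(q_{-k};q_k')$ for all $k$ and all $q_k'\in\Delta_k$. *)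

(* Defs.v *)
From HB Require Import structures.
From mathcomp Require Import all_boot all_order all_algebra.
From mathcomp Require Import all_classical all_reals all_analysis.
Set Implicit Arguments. Unset Strict Implicit. Unset Printing Implicit Defensive.
Import Order.TTheory GRing.Theory Num.Theory.
Local Open Scope classical_set_scope.
Local Open Scope ring_scope.

Section PMAC.
Variables (R : realType) (K A : nat).

Definition profile := 'M[R]_(K, A).

Definition strat_set (Pk : R) (x : 'I_A -> R) : Prop :=
  (forall a, 0 <= x a) /\ \sum_a x a = Pk.

Definition Delta (Pw : 'I_K -> R) : set profile :=
  [set p | forall k, strat_set (Pw k) (fun a => p k a)].

Definition payoff (b s2 : 'I_A -> R) (g : 'I_K -> 'I_A -> R)
  (p : profile) (k : 'I_K) : R :=
  \sum_a b a * ln (1 + g k a * p k a /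
                       (s2 a + \sum_(l | l != k) g l a * p l a)).

Definition deviate (p : profile) (k : 'I_K) (x : 'I_A -> R) : profile :=
  \matrix_(i, j) if i == k then x j else p i j.

Definition nash_eq (Pw : 'I_K -> R) (b s2 : 'I_A -> R)
  (g : 'I_K -> 'I_A -> R) (q : profile) : Prop :=
  Delta Pw q /\
  forall k x, strat_set (Pw k) x ->
    payoff b s2 g (deviate q k x) k <= payoff b s2 g q k.

Definition convex_set (S : set profile) : Prop :=
  forall x y (t : R), S x -> S y -> 0 <= t <= 1 -> S (t *: x + (1 - t) *: y).

Definition is_face (C F : set profile) : Prop :=
  [/\ F `<=` C, convex_set F &
      forall x y (t : R), C x -> C y -> 0 < t < 1 ->
        F (t *: x + (1 - t) *: y) -> F x /\ F y].

Definition aff_hull (F : set profile) : set profile :=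
  [set q | exists n (x : 'I_n -> profile) (w : 'I_n -> R),
     [/\ forall i, F (x i), \sum_i w i = 1 & q = \sum_i w i *: x i]].

(* dim (aff F) <= d : any d+2 points of F are affinely dependent *)
Definition affdim_le (F : set profile) (d : nat) : Prop :=
  forall x : 'I_d.+2 -> profile, (forall i, F (x i)) ->
    exists c : 'I_d.+2 -> R,
      [/\ exists i, c i != 0, \sum_i c i = 0 & \sum_i c i *: x i = 0].

Definition rel_interior (F : set profile) : set profile :=
  [set p | F p /\ exists2 e : R, 0 < e &
     forall q, aff_hull F q -> (forall i j, `|q i j - p i j| < e) -> F q].

End PMAC.

Definition mutually_independent {d} {T : measurableType d} {R : realType}
  (P : probability T R) (I : finType) (X : I -> T -> R) : Prop :=
  forall B : I -> set R, (forall i, measurable (B i)) ->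
    P (\bigcap_(i in [set: I]) (X i @^-1` B i)) =
    (\big[*%E/1%E]_(i : I) P (X i @^-1` B i))%E.

(* Main.v *)
Require Import Defs.
From HB Require Import structures.
From mathcomp Require Import all_boot all_order all_algebra.
From mathcomp Require Import all_classical all_reals all_analysis.
From mathcomp Require Import ring lra zify.
Set Implicit Arguments. Unset Strict Implicit. Unset Printing Implicit Defensive.
Import Order.TTheory GRing.Theory Num.Theory.
Local Open Scope classical_set_scope.
Local Open Scope ring_scope.
Lemma ln_diff_ge (R : realType) (s t : R) : 0 < s -> 0 < t -> (t - s) / t <= ln t - ln s.
Proof.
move=> s0 t0.
have h := @le_ln1Dx R (s / t - 1).
have : -1 < s / t - 1 by rewrite ltrBrDr addrC subrr divr_gt0.
move/h; rewrite addrC subrK ln_div ?posrE //.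
have -> : (t - s) / t = 1 - s / t by rewrite mulrBl divff ?gt_eqF.
lra.
Qed.

Lemma U_diff (R : realType) (B G c y z : R) : 0 < B -> 0 < G -> 0 < c -> 0 <= y -> 0 <= z ->
  B * (G * (z - y)) / (c + G * z) <= B * ln (1 + G * z / c) - B * ln (1 + G * y / c).
Proof.
move=> B0 G0 c0 y0 z0.
have s0 : 0 < 1 + G * y / c.
  have : 0 <= G * y / c by rewrite divr_ge0 ?mulr_ge0 // ltW.
  lra.
have t0 : 0 < 1 + G * z / c.
  have : 0 <= G * z / c by rewrite divr_ge0 ?mulr_ge0 // ltW.
  lra.
have := ln_diff_ge s0 t0.
have -> : (1 + G * z / c - (1 + G * y / c)) / (1 + G * z / c) = G * (z - y) / (c + G * z).
  have Gz : 0 <= G * z by rewrite mulr_ge0 // ltW.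
  have cz : c + G * z != 0 by rewrite gt_eqF //; lra.
  by field; rewrite cz gt_eqF.
move=> h; rewrite -mulrBr -mulrA ler_pM2l //.
Qed.

Section KKT.
Variables (R : realType) (K A : nat) (Pw : 'I_K -> R) (b s2 : 'I_A -> R)
  (g : 'I_K -> 'I_A -> R).
Hypotheses (hb : forall a, 0 < b a) (hs2 : forall a, 0 < s2 a)
  (hg : forall k a, 0 < g k a).

Definition den (p : 'M[R]_(K, A)) k a := s2 a + \sum_(l | l != k) g l a * p l a.
Definition Tot (p : 'M[R]_(K, A)) a := s2 a + \sum_l g l a * p l a.
Definition Uf (p : 'M[R]_(K, A)) k a y := b a * ln (1 + g k a * y / den p k a).

Lemma Tot_den p k a : Tot p a = den p k a + g k a * p k a.
Proof. rewrite /Tot /den (bigD1 k) //=; ring. Qed.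
Lemma den_gt0 p k a : Delta Pw p -> 0 < den p k a.
Proof.
move=> hp; rewrite /den; have : 0 <= \sum_(l | l != k) g l a * p l a.
  apply: sumr_ge0 => l _; apply: mulr_ge0; first exact: ltW.
  by case: (hp l) => h _; exact: h.
have := hs2 a; lra.
Qed.

Lemma payoff_dev p k x : payoff b s2 g (deviate p k x) k = \sum_a Uf p k a (x a).
Proof.
rewrite /payoff; apply: eq_bigr => a _; rewrite /Uf /den !mxE eqxx.
congr (_ * ln (1 + _ / (_ + _))); apply: eq_bigr => l lk; by rewrite mxE (negbTE lk).
Qed.

Lemma sum_two (f : 'I_A -> R) a a' : a != a' ->
  (forall j, j != a -> j != a' -> f j = 0) -> \sum_j f j = f a + f a'.
Proof.
move=> aa' hf; rewrite (bigD1 a) //= (bigD1 a') /=; last by rewrite eq_sym.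
rewrite big1 ?addr0 // => j /andP [ja ja']; exact: hf.
Qed.

Lemma mu_le p k a a' : nash_eq Pw b s2 g p -> a != a' -> 0 < p k a ->
  b a' * g k a' / Tot p a' <= b a * g k a / Tot p a.
Proof.
move=> [hp hn] aa' pka.
have pge l j : 0 <= p l j by case: (hp l) => h _; exact: h.
set c := den p k a; set c' := den p k a'.
have c0 : 0 < c by exact: den_gt0.
have c'0 : 0 < c' by exact: den_gt0.
set G := g k a; set G' := g k a'; set y := p k a; set y' := p k a'.
set B := b a; set B' := b a'.
have G0 : 0 < G by exact: hg. have G'0 : 0 < G' by exact: hg.
have B0 : 0 < B by exact: hb. have B'0 : 0 < B' by exact: hb.
have y'0 : 0 <= y' by exact: pge.
have H : forall e, 0 < e <= y ->
    B' * G' * e * (c + G * (y - e)) <= B * G * e * (c' + G' * (y' + e)).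
  move=> e /andP [e0 ey].
  pose x j := p k j - e * (j == a)%:R + e * (j == a')%:R.
  have xa : x a = y - e by rewrite /x eqxx (negbTE aa') mulr1 mulr0 addr0.
  have xa' : x a' = y' + e by rewrite /x eqxx eq_sym (negbTE aa') mulr1 mulr0 subr0.
  have sx : strat_set (Pw k) x.
    split.
      move=> j; rewrite /x; have [->|ja] := eqVneq j a.
        by rewrite (negbTE aa') mulr1 mulr0 addr0 subr_ge0.
      rewrite mulr0 subr0; apply: addr_ge0 => //.
      by rewrite mulr_ge0 // ?ltW.
    case: (hp k) => _ <-; rewrite /x big_split /= sumrB.
    rewrite (sum_two (f := fun j => e * (j == a)%:R) aa'); last first.
      by move=> j ja _; rewrite (negbTE ja) mulr0.
    rewrite (sum_two (f := fun j => e * (j == a')%:R) aa'); last first.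
      by move=> j _ ja'; rewrite (negbTE ja') mulr0.
    by rewrite eqxx (negbTE aa') eq_sym (negbTE aa') eqxx; ring.
  have := hn k x sx; rewrite payoff_dev.
  have -> : payoff b s2 g p k = \sum_j Uf p k j (p k j) by [].
  rewrite -subr_le0 -sumrB (sum_two (f := fun j => Uf p k j (x j) - Uf p k j (p k j)) aa'); last first.
    move=> j ja ja'; rewrite /x (negbTE ja) (negbTE ja') !mulr0 subr0 addr0 subrr //.
  rewrite xa xa' /Uf -/c -/c' -/G -/G' -/B -/B'.
  have y0 : 0 <= y by exact: pge.
  have ye : 0 <= y - e by rewrite subr_ge0.
  have y'e : 0 <= y' + e by rewrite addr_ge0 // ltW.
  have h1 := U_diff B0 G0 c0 y0 ye.
  have h2 := U_diff B'0 G'0 c'0 y'0 y'e.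
  set D := c + G * (y - e) in h1 *; set D' := c' + G' * (y' + e) in h2 *.
  have D0 : 0 < D by rewrite /D; have := mulr_ge0 (ltW G0) ye; lra.
  have D'0 : 0 < D' by rewrite /D'; have := mulr_ge0 (ltW G'0) y'e; lra.
  have e1 : B * (G * (y - e - y)) / D = - (B * G * e / D) by ring.
  have e2 : B' * (G' * (y' + e - y')) / D' = B' * G' * e / D' by ring.
  rewrite e1 in h1; rewrite e2 in h2.
  move=> hle.
  have q : B' * G' * e / D' <= B * G * e / D by lra.
  move: q; rewrite ler_pdivrMr // mulrAC => h.
  have h' := ler_wpM2r (ltW D0) h.
  have -> : B * G * e * D' = B * G * e / D * D' * D by field; rewrite gt_eqF.
  exact: h'.
have T0 : Tot p a = c + G * y by rewrite (Tot_den p k a).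
have T'0 : Tot p a' = c' + G' * y' by rewrite (Tot_den p k a').
rewrite T0 T'0.
have Tp : 0 < c + G * y.
  have : 0 <= G * y by apply: mulr_ge0; [exact: ltW | exact: pge].
  lra.
have T'p : 0 < c' + G' * y' by have := mulr_ge0 (ltW G'0) y'0; lra.
rewrite leNgt; apply/negP => hlt.
move: hlt; rewrite ltr_pdivrMr // mulrAC ltr_pdivlMr // => hlt.
set D := B' * G' * (c + G * y) - B * G * (c' + G' * y').
set C := B' * G' * G + B * G * G'.
have D0 : 0 < D by rewrite /D; lra.
have C0 : 0 < C by rewrite /C; apply: addr_gt0; apply: mulr_gt0 => //; apply: mulr_gt0.
set e := Num.min y (D / (2 * C)).
have e0 : 0 < e by rewrite lt_min pka divr_gt0 // mulr_gt0.
have ey : e <= y by rewrite ge_min lexx.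
have eD : e <= D / (2 * C) by rewrite ge_min lexx orbT.
have := H e; rewrite e0 ey => /(_ isT) hH.
have hH' : e * (B' * G' * (c + G * (y - e))) <= e * (B * G * (c' + G' * (y' + e))).
  have E1 : e * (B' * G' * (c + G * (y - e))) = B' * G' * e * (c + G * (y - e)) by ring.
  have E2 : e * (B * G * (c' + G' * (y' + e))) = B * G * e * (c' + G' * (y' + e)) by ring.
  by rewrite E1 E2.
rewrite ler_pM2l // in hH'.
have eC : e * C <= D / 2.
  have -> : D / 2 = D / (2 * C) * C by field; rewrite gt_eqF.
  by apply: ler_wpM2r => //; exact: ltW.
have : D <= e * C by rewrite /D /C; nra.
lra.
Qed.


Lemma Tot_gt0 p a : Delta Pw p -> 0 < Tot p a.
Proof.
move=> hp; rewrite /Tot; have : 0 <= \sum_l g l a * p l a.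
  apply: sumr_ge0 => l _; apply: mulr_ge0; first exact: ltW.
  by case: (hp l) => h _; exact: h.
have := hs2 a; lra.
Qed.

Lemma kkt_log p : nash_eq Pw b s2 g p ->
  exists (mu : 'I_K -> R) (rho : 'I_A -> R),
    forall k a, 0 < p k a -> ln (g k a) = mu k + rho a.
Proof.
move=> hn; have hp := hn.1.
pose MU k a := b a * g k a / Tot p a.
have MUp k a : 0 < MU k a by rewrite /MU divr_gt0 ?Tot_gt0 // mulr_gt0.
pose mu k := if [pick a | 0 < p k a] is Some a then ln (MU k a) else 0.
exists mu, (fun a => ln (Tot p a / b a)) => k a pka.
rewrite /mu; case: pickP => [a0 pka0|]; last by move/(_ a); rewrite pka.
have eMU : MU k a = MU k a0.
  have [->//|aa0] := eqVneq a a0.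
  apply/eqP; rewrite eq_le; apply/andP; split.
    by apply: mu_le => //; rewrite eq_sym.
  exact: mu_le.
have Ta := Tot_gt0 a hp.
have Ba := hb a.
rewrite -eMU -lnM ?posrE //; last by rewrite divr_gt0.
rewrite /MU; congr (ln _); field; rewrite !gt_eqF //.
Qed.

End KKT.
Lemma exists_kernel (F : fieldType) n m (B : 'M[F]_(n, m)) : (m < n)%N ->
  exists v : 'rV_n, v != 0 /\ v *m B = 0.
Proof.
move=> mn.
have hk : \rank (kermx B) != 0%N.
  rewrite mxrank_ker; have := rank_leq_col B; rewrite subn_eq0 -ltnNge.
  by move=> h; apply: leq_ltn_trans h mn.
have : kermx B != 0 by rewrite -mxrank_eq0.
have [i hi|] := pickP (fun i => row i (kermx B) != 0).
  move=> _; exists (row i (kermx B)); split => //.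
  by rewrite -row_mul mulmx_ker row0.
move=> h /negP; case; apply/eqP/row_matrixP => i.
by have /negbFE/eqP -> := h i; rewrite row0.
Qed.

Section Face.
Variables (R : realType) (K A : nat) (Pw : 'I_K -> R).
Hypothesis hPw : forall k, 0 < Pw k.
Variable p : 'M[R]_(K, A).
Hypothesis hp : Delta Pw p.

Definition Fp : set 'M[R]_(K, A) :=
  [set q | Delta Pw q /\ forall i j, p i j = 0 -> q i j = 0].

Lemma Fp_face : is_face (Delta Pw) Fp.
Proof.
split.
- by move=> q [].
- move=> x y t [hx zx] [hy zy] /andP [t0 t1]; split.
    move=> k; split.
      move=> j; rewrite !mxE; case: (hx k) => hx1 _; case: (hy k) => hy1 _.
      apply: addr_ge0; apply: mulr_ge0 => //; rewrite ?subr_ge0 //.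
    case: (hx k) => _ sx; case: (hy k) => _ sy.
    under eq_bigr do rewrite !mxE.
    by rewrite big_split /= -!mulr_sumr sx sy; ring.
  by move=> i j pij; rewrite !mxE zx // zy // !mulr0 addr0.
- move=> x y t hx hy /andP [t0 t1] [hz zz]; split; split => //.
    move=> i j pij; have := zz i j pij; rewrite !mxE.
    case: (hx i) => hx1 _; case: (hy i) => hy1 _.
    have := hx1 j; have := hy1 j; move=> yij xij h.
    have h1 : 0 <= t * x i j by rewrite mulr_ge0 // ltW.
    have h2 : 0 <= (1 - t) * y i j by rewrite mulr_ge0 // subr_ge0 ltW.
    have : t * x i j = 0 by lra.
    by move/eqP; rewrite mulf_eq0 gt_eqF //= => /eqP.
  move=> i j pij; have := zz i j pij; rewrite !mxE.
  case: (hx i) => hx1 _; case: (hy i) => hy1 _.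
  have := hx1 j; have := hy1 j; move=> yij xij h.
  have h1 : 0 <= t * x i j by rewrite mulr_ge0 // ltW.
  have h2 : 0 <= (1 - t) * y i j by rewrite mulr_ge0 // subr_ge0 ltW.
  have : (1 - t) * y i j = 0 by lra.
  by move/eqP; rewrite mulf_eq0 subr_eq0 eq_sym lt_eqF //= => /eqP.
Qed.


Lemma Fp_relint : rel_interior Fp p.
Proof.
have pge i j : 0 <= p i j by case: (hp i) => h _; exact: h.
split; first by split.
pose e := \big[Num.min/1]_(ij : 'I_K * 'I_A | p ij.1 ij.2 != 0) p ij.1 ij.2.
have e0 : 0 < e.
  rewrite /e; elim/big_ind: _ => //.
    by move=> u v u0 v0; rewrite lt_min u0 v0.
  by move=> [i j] /= pij; rewrite lt_neqAle eq_sym pij pge.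
have ele i j : p i j != 0 -> e <= p i j.
  by move=> pij; rewrite /e (bigD1 (i, j)) //= ge_min lexx.
exists e => // q [n [x [w [hx sw ->]]]] hq.
have zq i j : p i j = 0 -> (\sum_i0 w i0 *: x i0) i j = 0.
  move=> pij; rewrite summxE big1 // => i0 _; rewrite mxE.
  by case: (hx i0) => _ /(_ i j pij) ->; rewrite mulr0.
split; last exact: zq.
move=> k; split.
  move=> j; have [pkj|pkj] := eqVneq (p k j) 0; first by rewrite zq.
  have := hq k j; rewrite ltr_norml => /andP [h _].
  have := ele k j pkj; lra.
under eq_bigr do rewrite summxE.
rewrite exchange_big /=.
under eq_bigr => i0 _.
  under eq_bigr do rewrite mxE.
  rewrite -mulr_sumr; case: (hx i0) => /(_ k) [_ ->] _.
  over.
by rewrite -mulr_suml sw mul1r.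
Qed.

Hypothesis hA : (0 < A)%N.

Definition a0 : 'I_A := Ordinal hA.
Definition ak (k : 'I_K) : 'I_A := odflt a0 [pick j | p k j != 0].

Lemma ak_supp k : p k (ak k) != 0.
Proof.
rewrite /ak; case: pickP => [j //|h].
case: (hp k) => _ hs; have := hPw k; rewrite -hs big1 ?ltxx // => j _.
by have /negbFE/eqP := h j.
Qed.

Definition Sp : {set 'I_K * 'I_A} := [set ij : 'I_K * 'I_A | p ij.1 ij.2 != 0]%SET.
Definition Ep : {set 'I_K * 'I_A} :=
  [set ij : 'I_K * 'I_A | (p ij.1 ij.2 != 0) && (ij.2 != ak ij.1)]%SET.

Lemma card_Ep : (#|Ep| + K = #|Sp|)%N.
Proof.
pose Tk : {set 'I_K * 'I_A} := [set (k, ak k) | k : 'I_K]%SET.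
have cT : #|Tk| = K.
  rewrite card_imset ?card_ord // => k1 k2 /(congr1 fst) //.
have TS : Tk \subset Sp.
  by apply/fintype.subsetP => _ /imsetP [k _ ->]; rewrite inE /= ak_supp.
have -> : Ep = Sp :\: Tk.
  apply/setP => [[k j]]; rewrite !inE /=.
  case: (p k j != 0); rewrite ?andbT ?andbF //.
  apply/idP/idP => [h|].
    by apply/imsetP => -[k' _ [e1 e2]]; move: h; rewrite e2 e1 eqxx.
  apply: contra => /eqP ->; apply/imsetP; exists k => //.
rewrite cardsD (finset.setIidPr TS) cT subnK //.
by have := subset_leq_card TS; rewrite cT.
Qed.

Lemma Fp_affdim : (#|Sp| <= K + A.-1)%N -> affdim_le Fp A.-1.
Proof.
move=> hS x hx.
have cE := card_Ep.
set m := #|Ep| in cE *.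
have mn : (1 + m < (A.-1).+2)%N by rewrite add1n ltnS; move: hS; rewrite -cE; lia.
pose M : 'M[R]_((A.-1).+2, m) := \matrix_(i, e) x i (enum_val e).1 (enum_val e).2.
pose B := row_mx (const_mx 1 : 'M[R]_((A.-1).+2, 1)) M.
have [v [v0 vB]] := exists_kernel B mn.
move: vB; rewrite mul_mx_row => /eqP; rewrite row_mx_eq0 => /andP [/eqP v1 /eqP vM].
have hE k j : (k, j) \in Ep -> \sum_i v 0 i * x i k j = 0.
  move=> hkj; have := congr1 (fun N : 'M[R]_(1, m) => N 0 (enum_rank_in hkj (k, j))) vM.
  rewrite /= !mxE => h; rewrite -[RHS]h; apply: eq_bigr => i _; rewrite mxE (enum_rankK_in hkj hkj) //.
have hZ k j : j != ak k -> \sum_i v 0 i * x i k j = 0.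
  move=> jk; have [pkj|pkj] := eqVneq (p k j) 0.
    by rewrite big1 // => i _; case: (hx i) => _ /(_ k j pkj) ->; rewrite mulr0.
  by apply: hE; rewrite inE /= pkj jk.
have sv : \sum_i v 0 i = 0.
  have := congr1 (fun N : 'M[R]_(1, 1) => N 0 0) v1; rewrite !mxE => h; rewrite -[RHS]h.
  by apply: eq_bigr => i _; rewrite mxE mulr1.
have hAll k j : \sum_i v 0 i * x i k j = 0.
  have [->|jk] := eqVneq j (ak k); last exact: hZ.
  have ex i : x i k (ak k) = Pw k - \sum_(j' | j' != ak k) x i k j'.
    by case: (hx i) => /(_ k) [_ hs] _; rewrite -hs (bigD1 (ak k)) //= addrK.
  under eq_bigr do rewrite ex mulrBr.
  rewrite sumrB -mulr_suml sv mul0r sub0r.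
  under eq_bigr do rewrite mulr_sumr.
  rewrite exchange_big /= big1 ?oppr0 // => j' j'k; exact: hZ.
exists (fun i => v 0 i); split => //.
  apply/existsP; rewrite -negb_forall; apply: contra v0 => /forallP h.
  by apply/eqP/rowP => i; rewrite mxE; apply/eqP; exact: h.
apply/matrixP => k j; rewrite summxE mxE -[RHS](hAll k j).
by apply: eq_bigr => i _; rewrite mxE.
Qed.

End Face.
Lemma exists_kernel_rank (F : fieldType) n m (B : 'M[F]_(n, m)) : (\rank B < n)%N ->
  exists v : 'rV_n, v != 0 /\ v *m B = 0.
Proof.
move=> mn.
have hk : \rank (kermx B) != 0%N by rewrite mxrank_ker subn_eq0 -ltnNge.
have : kermx B != 0 by rewrite -mxrank_eq0.
have [i hi|] := pickP (fun i => row i (kermx B) != 0).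
  move=> _; exists (row i (kermx B)); split => //.
  by rewrite -row_mul mulmx_ker row0.
move=> h /negP; case; apply/eqP/row_matrixP => i.
by have /negbFE/eqP -> := h i; rewrite row0.
Qed.

Section Cyc.
Variables (R : realType) (K A : nat).

Lemma sum_pair_fst (F : 'I_K -> 'I_A -> R) k :
  \sum_(s : 'I_K * 'I_A) (s.1 == k)%:R * F s.1 s.2 = \sum_a F k a.
Proof.
rewrite -(pair_bigA _ (fun i j => (i == k)%:R * F i j)) /= (bigD1 k) //= [X in _ + X]big1 ?addr0.
  by apply: eq_bigr => a _; rewrite eqxx mul1r.
by move=> i ik; rewrite big1 // => a _; rewrite (negbTE ik) mul0r.
Qed.

Lemma sum_pair_snd (F : 'I_K -> 'I_A -> R) a :
  \sum_(s : 'I_K * 'I_A) (s.2 == a)%:R * F s.1 s.2 = \sum_k F k a.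
Proof.
rewrite -(pair_bigA _ (fun i j => (j == a)%:R * F i j)) /=.
apply: eq_bigr => k _; rewrite (bigD1 a) //= big1 ?addr0 ?eqxx ?mul1r //.
by move=> j ja; rewrite (negbTE ja) mul0r.
Qed.

Lemma sum_ind n (x : 'I_n) : \sum_k ((x == k)%:R : R) = 1.
Proof.
rewrite (bigD1 x) //= eqxx big1 ?addr0 // => k kx.
by rewrite eq_sym (negbTE kx).
Qed.

Lemma cycle_vec (S : {set 'I_K * 'I_A}) : (0 < K)%N -> (K + A <= #|S|)%N ->
  exists c : 'I_K -> 'I_A -> R, [/\ exists k a, c k a != 0,
     forall k a, (k, a) \notin S -> c k a = 0,
     forall k, \sum_a c k a = 0 & forall a, \sum_k c k a = 0].
Proof.
move=> K0 hS.
set N := #|S| in hS *.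
pose B1 : 'M[R]_(N, K) := \matrix_(e, k) ((enum_val e).1 == k)%:R.
pose B2 : 'M[R]_(N, A) := \matrix_(e, a) ((enum_val e).2 == a)%:R.
pose B := row_mx B1 B2.
pose u : 'rV[R]_(K + A) := row_mx (const_mx 1) (const_mx (-1)).
have uB : u *m B^T = 0.
  rewrite tr_row_mx mul_row_col; apply/rowP => e; rewrite !mxE.
  under eq_bigr do rewrite !mxE mul1r.
  under [X in _ + X]eq_bigr do rewrite !mxE mulN1r.
  by rewrite sumrN !sum_ind subrr.
have u0 : u != 0.
  apply/eqP => /rowP /(_ (lshift A (Ordinal K0))); rewrite row_mxEl mxE.
  by rewrite mxE => /eqP; rewrite oner_eq0.
have rB : (\rank B < N)%N.
  have h1 : (u <= kermx B^T)%MS by apply/sub_kermxP.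
  have := mxrankS h1; rewrite mxrank_ker mxrank_tr.
  have : \rank u != 0%N by rewrite mxrank_eq0.
  have := rank_leq_col B. move: hS; lia.
have [v [v0 vB]] := exists_kernel_rank rB.
move: vB; rewrite mul_mx_row => /eqP; rewrite row_mx_eq0 => /andP [/eqP v1 /eqP v2].
have N0 : (0 < N)%N by move: hS; lia.
pose i0 : 'I_N := Ordinal N0.
have x0S : enum_val i0 \in S := enum_valP i0.
pose f s := v 0 (enum_rank_in x0S s).
pose c k a := if (k, a) \in S then f (k, a) else 0.
have key (F : 'I_K * 'I_A -> R) :
    \sum_s F s * c s.1 s.2 = \sum_(e < N) F (enum_val e) * v 0 e.
  transitivity (\sum_(s in S) F s * f s).
    rewrite [RHS]big_mkcond; apply: eq_bigr => -[k a] _ /=; rewrite /c.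
    by case: ifP => _; rewrite ?mulr0.
  rewrite big_enum_val; apply: eq_bigr => e _.
  by rewrite /f enum_valK_in.
exists c; split.
- have [e he] : exists e, v 0 e != 0.
    apply/existsP; rewrite -negb_forall; apply: contra v0 => /forallP h.
    by apply/eqP/rowP => i; rewrite mxE; apply/eqP; exact: h.
  exists (enum_val e).1, (enum_val e).2; rewrite /c -surjective_pairing enum_valP.
  by rewrite /f enum_valK_in.
- by move=> k a /negbTE h; rewrite /c h.
- move=> k; rewrite -sum_pair_fst (key (fun s => (s.1 == k)%:R)).
  have h := congr1 (fun M : 'M[R]_(1, K) => M 0 k) v1; rewrite !mxE in h.
  by rewrite -[RHS]h; apply: eq_bigr => e _; rewrite mxE mulrC.
- move=> a; rewrite -sum_pair_snd (key (fun s => (s.2 == a)%:R)).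
  have h := congr1 (fun M : 'M[R]_(1, A) => M 0 a) v2; rewrite !mxE in h.
  by rewrite -[RHS]h; apply: eq_bigr => e _; rewrite mxE mulrC.
Qed.
End Cyc.
Section Meas.
Context d (T : measurableType d) (R : realType) (P : probability T R).
Variables (I : finType) (X : I -> T -> R).
Hypothesis mX : forall i, measurable_fun setT (X i).
Hypothesis indep : mutually_independent P X.
Variable i0 : I.

Definition Rect : set (set T) := [set E | exists B : I -> set R,
  [/\ (forall i, measurable (B i)), B i0 = setT &
      E = \bigcap_(i in [set: I]) X i @^-1` B i]].

Lemma mpre i (B : set R) : measurable B -> measurable (X i @^-1` B).
Proof. by move=> mB; rewrite -[X in measurable X]setTI; exact: mX. Qed.

Lemma Rect_meas : Rect `<=` measurable.
Proof.
move=> _ [B [mB _ ->]]; apply: fin_bigcap_measurable; first exact: finite_finset.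
by move=> i _; exact: mpre.
Qed.

Lemma Rect_setI : setI_closed Rect.
Proof.
move=> _ _ [B [mB Bi0 ->]] [B' [mB' B'i0 ->]].
exists (fun i => B i `&` B' i); split.
- by move=> i; exact: measurableI.
- by rewrite Bi0 B'i0 setTI.
- by rewrite -bigcapI; apply: eq_bigcapr => i _; rewrite preimage_setI.
Qed.

Lemma Rect_setT : Rect setT.
Proof.
exists (fun=> setT); split => //.
by apply/seteqP; split => w //.
Qed.

Lemma indep_rect C E : measurable C -> Rect E ->
  P (X i0 @^-1` C `&` E) = (P (X i0 @^-1` C) * P E)%E.
Proof.
move=> mC [B [mB Bi0 ->]].
pose B' i := if i == i0 then C else B i.
have mB' i : measurable (B' i) by rewrite /B'; case: eqP.
have e1 : X i0 @^-1` C `&` \bigcap_(i in setT) X i @^-1` B i =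
          \bigcap_(i in setT) X i @^-1` B' i.
  apply/seteqP; split => w /=.
    move=> [hC hB] i _; rewrite /B'; case: eqP => [->|_] //; exact: hB.
  move=> h; split; first by have := h i0 Logic.I; rewrite /B' eqxx.
  move=> i _; have := h i Logic.I; rewrite /B'; case: eqP => [->|] //; by rewrite Bi0.
rewrite e1 !indep //.
rewrite (bigD1 i0) //= [X in _ = (_ * X)%E](bigD1 i0) //=.
rewrite /B' eqxx Bi0 preimage_setT probability_setT mul1e.
congr (_ * _)%E; apply: eq_bigr => i ii0; by rewrite /B' (negbTE ii0).
Qed.

Lemma Pfin (E : set T) : measurable E -> P E \is a fin_num.
Proof.
move=> mE; rewrite ge0_fin_numE ?measure_ge0 //.
by apply: (le_lt_trans (probability_le1 P mE)); rewrite ltry.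
Qed.

Lemma indep_sigma C E : measurable C -> <<s Rect >> E ->
  P (X i0 @^-1` C `&` E) = (P (X i0 @^-1` C) * P E)%E.
Proof.
move=> mC sE.
have mD := mpre i0 mC.
pose m1 := mrestr P mD.
pose r := NngNum (fine_ge0 (measure_ge0 P (X i0 @^-1` C))).
pose m2 := mscale r P.
have cov : \bigcup_(k : nat) (fun=> setT : set T) k = setT.
  by apply/seteqP; split => // w _; exists 0%N.
have := @g_sigma_algebra_measure_unique _ _ _ Rect Rect_meas (fun=> setT)
  (fun=> Rect_setT) cov m1 m2 Rect_setI.
have hD := Pfin mD.
have h12 : forall A, Rect A -> m1 A = m2 A.
  move=> A RA; rewrite /m1 /m2 /mrestr /mscale /= fineK // setIC.
  exact: indep_rect.
have hoo : forall k : nat, (m1 ((fun=> setT) k) < +oo)%E.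
  move=> k; rewrite /m1 /mrestr /=; apply: (le_lt_trans (probability_le1 P _)).
    exact: measurableI.
  by rewrite ltry.
move=> /(_ h12 hoo E sE) h.
change (P (E `&` X i0 @^-1` C) = ((fine (P (X i0 @^-1` C)))%:E * P E)%E) in h.
by rewrite setIC h fineK.
Qed.

Lemma Rect_pre i (D : set R) : i != i0 -> measurable D -> Rect (X i @^-1` D).
Proof.
move=> ii0 mD; exists (fun j => if j == i then D else setT); split.
- by move=> j; case: eqP.
- by rewrite eq_sym (negbTE ii0).
- apply/seteqP; split => w /=.
    by move=> h j _; case: eqP => [->|].
  by move=> /(_ i Logic.I); rewrite eqxx.
Qed.

Lemma sRect_meas : <<s Rect >> `<=` measurable.
Proof. apply: smallest_sub => //; [exact: sigma_algebra_measurable | exact: Rect_meas]. Qed.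

End Meas.

Section Meas2.
Context d (T : measurableType d) (R : realType) (P : probability T R).
Variables (I : finType) (X : I -> T -> R) (i0 : I) (Z : T -> R).
Hypothesis mX : forall i, measurable_fun setT (X i).
Hypothesis indep : mutually_independent P X.
Hypothesis natom : forall x, P (X i0 @^-1` [set x]) = 0%E.
Hypothesis mZ' : forall D, measurable D -> <<s Rect X i0 >> (Z @^-1` D).

Definition Xf := X i0.
Definition Zf := Z.
Lemma mXf : measurable_fun setT Xf. Proof. exact: mX. Qed.
Lemma mZf : measurable_fun setT Zf.
Proof. move=> _ D mD; rewrite setTI; apply: sRect_meas; [exact: mX | exact: mZ']. Qed.
HB.instance Definition _ := isMeasurableFun.Build _ _ T R Xf mXf.
HB.instance Definition _ := isMeasurableFun.Build _ _ T R Zf mZf.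
Definition XZ w := (Xf w, Zf w).
Lemma mXZ : measurable_fun setT XZ.
Proof. exact: measurable_fun_pair mXf mZf. Qed.
HB.instance Definition _ := isMeasurableFun.Build _ _ T (R * R)%type XZ mXZ.

Let muX := distribution P Xf.
Let muZ := distribution P Zf.
Let muXZ := distribution P XZ.

Lemma joint_rect (A B : set R) : measurable A -> measurable B ->
  muXZ (A `*` B) = (muX \x^ muZ)%E (A `*` B).
Proof.
move=> mA mB; rewrite product_measure2E //.
rewrite /muXZ /muX /muZ /distribution /pushforward /=.
have -> : XZ @^-1` (A `*` B) = Xf @^-1` A `&` Zf @^-1` B by [].
exact: (indep_sigma mX indep mA (mZ' mB)).
Qed.

Lemma joint_eq (D : set (R * R)) : measurable D -> muXZ D = (muX \x^ muZ)%E D.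
Proof.
move=> mD.
pose G : set (set (R * R)) := [set A `*` B | A in measurable & B in measurable].
have mG : measurable = <<s G >> by exact: measurable_prod_measurableType.
have setIG : setI_closed G.
  move=> _ _ [A mA [B mB <-]] [A' mA' [B' mB' <-]].
  by rewrite -setXI; exists (A `&` A'); [exact: measurableI | exists (B `&` B') => //; exact: measurableI].
have Gg : forall k : nat, G ((fun=> setT) k).
  by move=> k; exists setT => //; exists setT => //; rewrite setXTT.
have cov : \bigcup_(k : nat) (fun=> setT : set (R * R)) k = setT.
  by apply/seteqP; split => // w _; exists 0%N.
have m12 : forall A, G A -> muXZ A = (muX \x^ muZ)%E A.
  by move=> _ [A mA [B mB <-]]; exact: joint_rect.
have goo : forall k : nat, (muXZ ((fun=> setT) k) < +oo)%E.
  by move=> k; rewrite /muXZ probability_setT ltry.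
exact: (measure_unique G (fun=> setT) mG setIG Gg cov muXZ (muX \x^ muZ)%E m12 goo).
Qed.

Let Dg : set (R * R) := [set z | z.1 = z.2].
Lemma mDg : measurable Dg.
Proof.
  have -> : Dg = (fun z : R * R => z.1 - z.2) @^-1` [set 0].
    by apply/seteqP; split => z /=; [move=> -> ; rewrite subrr | move/eqP; rewrite subr_eq0 => /eqP].
  rewrite -[X in measurable X]setTI.
  by apply: (measurable_realfun.measurable_funB measurable_fst measurable_snd).
Qed.

Lemma XZ_meas : measurable [set w | Xf w = Zf w].
Proof.
have -> : [set w | Xf w = Zf w] = XZ @^-1` Dg by [].
rewrite -[X in measurable X]setTI; exact: mXZ mDg.
Qed.

Lemma diag_zero : P [set w | Xf w = Zf w] = 0%E.
Proof.
have := joint_eq mDg.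
rewrite /muXZ /distribution /pushforward /= => ->.
rewrite /product_measure2 /=.
apply: integral0_eq => y _ /=.
have -> : ysection Dg y = [set y].
  by apply/seteqP; split => x; rewrite /ysection /= inE.
exact: natom.
Qed.
End Meas2.

Lemma bad_negligible d (T : measurableType d) (R : realType) (P : probability T R)
  (I : finType) (X : I -> T -> R) (F : I -> R) (i0 : I) :
  (forall i, measurable_fun setT (X i)) -> mutually_independent P X ->
  (forall x, P (X i0 @^-1` [set x]) = 0%E) -> (forall i w, 0 < X i w) -> F i0 != 0 ->
  P.-negligible [set w | \sum_i F i * ln (X i w) = 0].
Proof.
move=> mX indep natom Xpos F0.
pose Sm w := \sum_i (if i != i0 then F i * ln (X i w) else 0).
pose Z w := expR (- (F i0)^-1 * Sm w).
have mZT : measurable_fun (setT : set (g_sigma_algebraType (Rect X i0))) Z.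
  apply: measurableT_comp; first exact: measurable_realfun.measurable_expR.
  apply: measurable_realfun.measurable_funM; first exact: measurable_cst.
  apply: measurable_sum => i.
  case: (boolP (i != i0)) => ii0; last exact: measurable_cst.
  apply: measurable_realfun.measurable_funM; first exact: measurable_cst.
  apply: measurableT_comp; first exact: measurable_realfun.measurable_ln.
  move=> _ D mD; rewrite setTI; apply: sub_sigma_algebra; exact: Rect_pre.
have mZ' : forall D, measurable D -> <<s Rect X i0 >> (Z @^-1` D).
  by move=> D mD; have := mZT measurableT D mD; rewrite setTI.
exists [set w | Xf X i0 w = Zf Z w]; split.
- exact: XZ_meas mX mZ'.
- exact: diag_zero mX indep natom mZ'.
- move=> w /= hw; rewrite /Xf /Zf /Z.
  have : F i0 * ln (X i0 w) + Sm w = 0.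
    by rewrite -hw (bigD1 i0) //= big_mkcond.
  move=> h; have -> : - (F i0)^-1 * Sm w = ln (X i0 w).
    apply: (mulfI F0); rewrite mulrA mulrN divff // mulN1r; lra.
  by rewrite lnK // posrE.
Qed.

Lemma negl_big d (T : measurableType d) (R : realType) (P : probability T R)
  (J : eqType) (s : seq J) (B : J -> set T) :
  (forall j, P.-negligible (B j)) -> P.-negligible (\big[setU/set0]_(j <- s) B j).
Proof.
move=> hB; elim/big_ind: _ => //; first exact: negligible_set0.
by move=> U V; exact: negligibleU.
Qed.

Lemma sub_big (T : Type) (J : eqType) (s : seq J) (B : J -> set T) j :
  j \in s -> B j `<=` \big[setU/set0]_(j <- s) B j.
Proof. by move=> js; rewrite (big_rem j js) /=; apply: subsetUl. Qed.

Theorem corollary2 (R : realType) (K A : nat) (hK : (0 < K)%N) (hA : (0 < A)%N)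
  (Pw : 'I_K -> R) (hPw : forall k, 0 < Pw k)
  (b s2 : 'I_A -> R) (hb : forall a, 0 < b a) (hs2 : forall a, 0 < s2 a)
  (d : measure_display) (T : measurableType d) (P : probability T R)
  (G : 'I_K -> 'I_A -> T -> R)
  (G_meas : forall k a, measurable_fun setT (G k a))
  (G_pos : forall k a w, 0 < G k a w)
  (G_indep : mutually_independent P (fun ka : 'I_K * 'I_A => G ka.1 ka.2))
  (G_ident : forall k a k' a' (B : set R), measurable B ->
     P (G k a @^-1` B) = P (G k' a' @^-1` B))
  (G_nonatomic : forall k a (x : R), P (G k a @^-1` [set x]) = 0%E) :
  {ae P, forall w,
     forall p : 'M[R]_(K, A), nash_eq Pw b s2 (fun k a => G k a w) p ->
       exists F : set 'M[R]_(K, A),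
         [/\ is_face (Delta Pw) F, affdim_le F A.-1 & rel_interior F p]}.
Proof.
pose X (i : 'I_K * 'I_A) := G i.1 i.2.
pose BS (S : {set 'I_K * 'I_A}) : set T := [set w | (K + A <= #|S|)%N /\
  exists (mu : 'I_K -> R) (rho : 'I_A -> R),
    forall i, i \in S -> ln (X i w) = mu i.1 + rho i.2].
have nBS S : P.-negligible (BS S).
  have [hS|hS] := boolP (K + A <= #|S|)%N; last first.
    by apply: (negligibleS _ (negligible_set0 P)) => w [h _]; rewrite h in hS.
  have [c [[k0 [a0 c0]] cS crow ccol]] := @cycle_vec R K A S hK hS.
  pose F (i : 'I_K * 'I_A) := c i.1 i.2.
  apply: (negligibleS _ (@bad_negligible _ _ _ P _ X F (k0, a0) _ G_indep _ _ c0)).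
  - move=> w [_ [mu [rho h]]] /=.
    transitivity (\sum_(i : 'I_K * 'I_A) F i * (mu i.1 + rho i.2)).
      apply: eq_bigr => i _; have [iS|iS] := boolP (i \in S); first by rewrite h.
      by rewrite /F cS ?mul0r // -surjective_pairing.
    under eq_bigr do rewrite mulrDr.
    rewrite big_split /=.
    have -> : \sum_(i : 'I_K * 'I_A) F i * mu i.1 = \sum_k \sum_a F (k, a) * mu k.
      by rewrite pair_bigA; apply: eq_bigr => -[k a].
    have -> : \sum_(i : 'I_K * 'I_A) F i * rho i.2 = \sum_k \sum_a F (k, a) * rho a.
      by rewrite pair_bigA; apply: eq_bigr => -[k a].
    rewrite big1; last by move=> k _; rewrite -mulr_suml crow mul0r.
    rewrite exchange_big big1 ?addr0 //= => a _.
    by rewrite -mulr_suml ccol mul0r.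
  - by move=> i; exact: G_meas.
  - by move=> x; exact: G_nonatomic.
  - by move=> i w; exact: G_pos.
have nB : P.-negligible (\big[setU/set0]_(S <- index_enum {set 'I_K * 'I_A}) BS S).
  exact: negl_big.
apply: (negligibleS _ nB) => w /= nQ.
apply: contrapT => hB; apply: nQ => p hn.
have hp := hn.1.
have pge k a : 0 <= p k a by case: (hp k) => h _; exact: h.
have [hS|hS] := leqP (K + A) #|Sp p|.
  exfalso; apply: hB; apply: (@sub_big _ _ _ _ (Sp p)); first exact: mem_index_enum.
  split => //.
  have hg : forall k a, 0 < G k a w by move=> k a; exact: G_pos.
  have [mu [rho h]] := kkt_log hb hs2 hg hn.
  exists mu, rho => -[k a]; rewrite inE /= => pka; apply: h.
  by rewrite lt_neqAle eq_sym pka pge.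
exists (Fp Pw p); split.
- exact: Fp_face.
- apply: Fp_affdim => //; move: hS; lia.
- exact: Fp_relint.
Qed.
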